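(* Let $d>2$, let $\alpha,\lambda\in\overline{\mathbb Q}^*$, let $|\cdot|_v$ be an absolute value on $\overline{\mathbb Q}$, and let $L=\max\{|\alpha|_v,1/|\alpha|_v\}$. Then for all $n_0\ge1$, $$\left|\lim_{n\to\infty}\frac{\log M_{n,v}}{d^n}-\frac{\log M_{n_0,v}}{d^{n_0}}\right|\le(3d-2)\log(2L).$$
   Context: Define $A_0=\alpha$, $B_0=1$, and for $n\ge0$, $A_{n+1}=A_n^d+\lambda B_n^d$, $B_{n+1}=A_nB_n^{d-1}$ (so $[A_n:B_n]$ is the $n$-th iterate of $\alpha$ under $z\mapsto(z^d+\lambda)/z$). Set $M_{n,v}=\max\{|A_n|_v,|B_n|_v\}$. *)

(* Defs.v *)
From HB Require Import structures.
From mathcomp Require Import all_boot all_order all_algebra all_field.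
From mathcomp Require Import all_classical all_reals all_analysis.
Set Implicit Arguments. Unset Strict Implicit. Unset Printing Implicit Defensive.
Import Order.TTheory GRing.Theory Num.Theory numFieldNormedType.Exports.
Local Open Scope ring_scope.

(* Qbar is modelled by algC (the algebraic closure of Q in MathComp). *)

Definition is_absval (R : realType) (v : algC -> R) : Prop :=
  [/\ forall x, 0 <= v x,
      forall x, v x = 0 <-> x = 0,
      forall x y, v (x * y) = v x * v y &
      forall x y, v (x + y) <= v x + v y].

Fixpoint AB (d : nat) (alpha lambda : algC) (n : nat) : algC * algC :=
  match n with
  | 0 => (alpha, 1)
  | n.+1 => let: (A, B) := AB d alpha lambda n in
            (A ^+ d + lambda * B ^+ d, A * B ^+ d.-1)
  end.

Definition Mnv (R : realType) (v : algC -> R) (d : nat) (alpha lambda : algC)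
  (n : nat) : R :=
  Num.max (v (AB d alpha lambda n).1) (v (AB d alpha lambda n).2).

(* Main.v *)
Require Import Defs.
From HB Require Import structures.
From mathcomp Require Import all_boot all_order all_algebra all_field.
From mathcomp Require Import all_classical all_reals all_analysis.
From mathcomp Require Import lra ring zify.
Import Order.TTheory GRing.Theory Num.Theory numFieldNormedType.Exports.
Local Open Scope ring_scope.
Set Implicit Arguments. Unset Strict Implicit.

Lemma pw (R : realType) n (x y : R) : 0 <= x -> x <= y -> x ^+ n <= y ^+ n.
Proof. move=> x0 xy; apply: lerXn2r => //; rewrite nnegrE //; exact: le_trans xy. Qed.

Lemma av1 (R : realType) (v : algC -> R) : is_absval v -> v 1 = 1.
Proof.
case=> h0 h1 hM _.
have e : v 1 = v 1 * v 1 by rewrite -hM mulr1.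
have n0 : v 1 != 0 by apply/eqP => /h1/eqP; rewrite oner_eq0.
by apply: (mulfI n0); rewrite mulr1 -e.
Qed.

Lemma avX (R : realType) (v : algC -> R) x n : is_absval v -> v (x ^+ n) = v x ^+ n.
Proof.
move=> hv; elim: n => [|n IH]; first by rewrite !expr0 av1.
by case: hv => _ _ hM _; rewrite !exprS hM IH.
Qed.

Lemma avN (R : realType) (v : algC -> R) x : is_absval v -> v (- x) = v x.
Proof.
move=> hv; have h1 := av1 hv; case: hv => h0 _ hM _.
have e : v (-1) * v (-1) = 1 by rewrite -hM mulrNN mulr1.
have p := h0 (-1).
have : v (-1) = 1.
  have : (v (-1) - 1) * (v (-1) + 1) = 0 by rewrite -[RHS](subrr 1) -{3}e; ring.
  move/eqP; rewrite mulf_eq0 => /orP [/eqP H|/eqP H]; first lra.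
  lra.
by move=> e1; rewrite -mulN1r hM e1 mul1r.
Qed.

Lemma avB (R : realType) (v : algC -> R) x y : is_absval v -> v x - v y <= v (x + y).
Proof.
move=> hv; have hN := avN y hv; case: hv => h0 _ hM hD.
have := hD (x + y) (- y); rewrite addrK hN; lra.
Qed.

Lemma avB2 (R : realType) (v : algC -> R) x y : is_absval v -> v y - v x <= v (x + y).
Proof. by move=> hv; rewrite [x + y]addrC; exact: (avB y x hv). Qed.

Lemma ABS d a l n : AB d a l n.+1 =
  ((AB d a l n).1 ^+ d + l * (AB d a l n).2 ^+ d, (AB d a l n).1 * (AB d a l n).2 ^+ d.-1).
Proof. by rewrite /=; case: (AB d a l n). Qed.

Lemma exS (R : realType) (d : nat) (x : R) : (0 < d)%N -> x ^+ d = x * x ^+ d.-1.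
Proof. by move=> d0; rewrite -{1}(prednK d0) exprS. Qed.

Lemma up_gen (R : realType) (d : nat) (a b r a' : R) : (0 < d)%N ->
  0 <= a -> 0 <= b -> 0 <= r -> a' <= a ^+ d + r * b ^+ d ->
  Num.max a' (a * b ^+ d.-1) <= (1 + r) * (Num.max a b) ^+ d.
Proof.
move=> d0 a0 b0 r0 H1; set M := Num.max a b.
have aM : a <= M by rewrite le_max lexx.
have bM : b <= M by rewrite le_max lexx orbT.
have M0 : 0 <= M by apply: le_trans aM.
have h1 := pw d a0 aM; have h2 := pw d b0 bM; have h3 := pw d.-1 b0 bM.
have h4 : 0 <= b ^+ d.-1 by apply: exprn_ge0.
have h5 : 0 <= M ^+ d by apply: exprn_ge0.
rewrite ge_max; apply/andP; split.
  nra.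
have h6 : a * b ^+ d.-1 <= M ^+ d by rewrite (exS M d0); apply: ler_pM.
nra.
Qed.

Lemma low_mid (R : realType) (d : nat) (a b r a' : R) : (0 < d)%N ->
  0 <= a -> 0 <= b -> 1 <= 2 * r ->
  a ^+ d - r * b ^+ d <= a' -> r * b ^+ d - a ^+ d <= a' ->
  (Num.max a b) ^+ d <= 4 * Num.max 1 r * Num.max a' (a * b ^+ d.-1).
Proof.
move=> d0 a0 b0 r1 H2 H3.
set M' := Num.max a' _.
have m1 : 1 <= Num.max 1 r by rewrite le_max lexx.
have m2 : r <= Num.max 1 r by rewrite le_max lexx orbT.
have aM : a' <= M' by rewrite le_max lexx.
have bM : a * b ^+ d.-1 <= M' by rewrite le_max lexx orbT.
have hP : 0 <= b ^+ d.-1 by apply: exprn_ge0.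
have hA : 0 <= a ^+ d by apply: exprn_ge0.
have hB : 0 <= b ^+ d by apply: exprn_ge0.
have M'0 : 0 <= M' by apply: le_trans bM; apply: mulr_ge0.
have r0 : 0 <= r by lra.
have hm1 : M' <= Num.max 1 r * M' by rewrite ler_peMl.
have hm2 : r * M' <= Num.max 1 r * M' by rewrite ler_wpM2r.
have hr : r * (a * b ^+ d.-1) <= r * M' by rewrite ler_wpM2l.
case: (leP b a) => ab.
  have e1 : b ^+ d <= a * b ^+ d.-1 by rewrite (exS b d0); nra.
  have e2 : r * b ^+ d <= r * (a * b ^+ d.-1) by rewrite ler_wpM2l.
  case: (leP (2 * r * b ^+ d) (a ^+ d)) => c.
    rewrite -mulrA; lra.
  rewrite -mulrA in c; rewrite -mulrA; lra.
case: (leP (2 * a ^+ d) (r * b ^+ d)) => c; first nra.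
have : b ^+ d <= 4 * (a * b ^+ d.-1); last by nra.
rewrite leNgt; apply/negP => c2.
have e1 : 4 * a < b.
  rewrite (exS b d0) in c2; rewrite ltNge; apply/negP => c3; nra.
have := pw d (mulr_ge0 (ler0n _ 4) a0) (ltW e1).
rewrite exprMn.
have : 4 <= (4 : R) ^+ d.
  by apply: (ler_eXnr d0); rewrite ler1n.
nra.
Qed.

Lemma small_step (R : realType) (d : nat) (a b r a' Q : R) : (0 < d)%N ->
  0 <= a -> 0 <= b -> 0 <= r -> 1 <= Q ->
  a ^+ d - r * b ^+ d <= a' ->
  b <= Q * a -> 2 * r * Q ^+ d <= 1 ->
  a * b ^+ d.-1 <= 2 * Q ^+ d.-1 * a'.
Proof.
move=> d0 a0 b0 r0 Q1 H2 bQ rQ.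
have Q0 : 0 <= Q by lra.
have h1 := pw d b0 bQ; have h2 := pw d.-1 b0 bQ.
rewrite exprMn in h1; rewrite exprMn in h2.
have hA : 0 <= a ^+ d by apply: exprn_ge0.
have hQ : 0 <= Q ^+ d by apply: exprn_ge0.
have hQ' : 0 <= Q ^+ d.-1 by apply: exprn_ge0.
have e1 : r * b ^+ d <= r * (Q ^+ d * a ^+ d) by rewrite ler_wpM2l.
have e2 : a ^+ d <= 2 * a'.
  have : r * (Q ^+ d * a ^+ d) <= a ^+ d / 2.
    have := ler_wpM2r hA rQ; rewrite mul1r => h; lra.
  lra.
have e3 : a * b ^+ d.-1 <= a * (Q ^+ d.-1 * a ^+ d.-1) by rewrite ler_wpM2l.
have e4 : a * (Q ^+ d.-1 * a ^+ d.-1) = Q ^+ d.-1 * a ^+ d.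
  by rewrite (exS a d0); ring.
have e5 : Q ^+ d.-1 * a ^+ d <= Q ^+ d.-1 * (2 * a') by rewrite ler_wpM2l.
lra.
Qed.

Lemma small_low (R : realType) (d : nat) (a b r a' Q : R) : (0 < d)%N ->
  0 <= a -> 0 <= b -> 0 <= r -> 2 * r <= 1 -> 1 <= Q ->
  a ^+ d - r * b ^+ d <= a' -> r * b ^+ d - a ^+ d <= a' ->
  (b <= Q * a \/ 1 <= 2 * r * Q ^+ d) ->
  (Num.max a b) ^+ d <= 4 * Q ^+ d * Num.max a' (a * b ^+ d.-1).
Proof.
move=> d0 a0 b0 r0 r1 Q1 H2 H3 HP.
set M' := Num.max a' _.
have aM : a' <= M' by rewrite le_max lexx.
have bM : a * b ^+ d.-1 <= M' by rewrite le_max lexx orbT.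
have hP : 0 <= b ^+ d.-1 by apply: exprn_ge0.
have hA : 0 <= a ^+ d by apply: exprn_ge0.
have hB : 0 <= b ^+ d by apply: exprn_ge0.
have M'0 : 0 <= M' by apply: le_trans bM; apply: mulr_ge0.
have Q0 : 0 <= Q by lra.
have hQ : 1 <= Q ^+ d by apply: exprn_ege1.
have hQ2 : Q <= Q ^+ d by apply: ler_eXnr.
have hm : M' <= Q ^+ d * M' by rewrite ler_peMl.
have hm2 : Q * M' <= Q ^+ d * M' by rewrite ler_wpM2r.
case: (leP b a) => ab.
  have e1 : r * b ^+ d <= r * a ^+ d by rewrite ler_wpM2l // pw.
  rewrite -mulrA; nra.
case: HP => HP.
  have e1 : b ^+ d <= Q * (a * b ^+ d.-1).
    rewrite (exS b d0) mulrA; apply: ler_wpM2r => //.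
  have e2 : Q * (a * b ^+ d.-1) <= Q * M' by rewrite ler_wpM2l.
  rewrite -mulrA; lra.
have key : r * b ^+ d <= 2 * M'.
  case: (leP (2 * a ^+ d) (r * b ^+ d)) => c; first lra.
  have : r * b ^+ d <= 2 * (a * b ^+ d.-1); last by lra.
  rewrite leNgt; apply/negP => c2.
  have e1 : a <= r / 2 * b.
    rewrite (exS b d0) in c2; rewrite leNgt; apply/negP => c3.
    have : r / 2 * b * b ^+ d.-1 <= a * b ^+ d.-1 by rewrite ler_wpM2r // ltW.
    nra.
  have := pw d a0 e1.
  rewrite exprMn.
  have hr : (r / 2) ^+ d <= r / 2.
    have : (r / 2) ^+ d.-1 <= 1 by apply: exprn_ile1; lra.
    rewrite (exS _ d0) => h.
    have := ler_wpM2l (_ : 0 <= r / 2) h; rewrite mulr1; apply; lra.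
  have := ler_wpM2r hB hr; nra.
have e1 : b ^+ d <= b ^+ d * (2 * r * Q ^+ d) by rewrite ler_peMr.
have e2 : b ^+ d * (2 * r * Q ^+ d) = 2 * Q ^+ d * (r * b ^+ d) by ring.
have e3 : 2 * Q ^+ d * (r * b ^+ d) <= 2 * Q ^+ d * (2 * M').
  by rewrite ler_wpM2l // mulr_ge0 // ?ler0n // exprn_ge0.
have e4 : 2 * Q ^+ d * (2 * M') = 4 * Q ^+ d * M' by ring.
lra.
Qed.

Lemma large_step (R : realType) (k : nat) (a b r a' : R) :
  0 <= a -> 0 <= b -> 0 <= r ->
  a' <= a ^+ k.+3 + r * b ^+ k.+3 -> a ^+ k.+3 - r * b ^+ k.+3 <= a' ->
  2 * b <= a -> 2 * r * b ^+ k.+3 <= a ^+ k.+3 ->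
  [/\ 2 * (a * b ^+ k.+2) <= a',
      2 * r * (a * b ^+ k.+2) ^+ k.+3 <= a' ^+ k.+3,
      (Num.max a b) ^+ k.+3 <= 2 * Num.max a' (a * b ^+ k.+2) &
      Num.max a' (a * b ^+ k.+2) <= 2 * (Num.max a b) ^+ k.+3].
Proof.
move=> a0 b0 r0 H1 H2 ba rb.
have t4 : (8 : R) <= 2 ^+ k.+3.
  by rewrite !exprS; have := exprn_ege1 k (ler1n R 2); lra.
set X := a ^+ k.+3 in H1 H2 rb *; set Y := b ^+ k.+3 in H1 H2 rb *.
set t := (2 : R) ^+ k.+3 in t4 *.
have X0 : 0 <= X by apply: exprn_ge0.
have Y0 : 0 <= Y by apply: exprn_ge0.
have rb' : 2 * (r * Y) <= X by rewrite mulrA.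
have ha' : X <= 2 * a' by lra.
have ab : b <= a by lra.
have hb2 : b <= a / 2 by lra.
have hY : Y <= X / t.
  by have := pw k.+3 b0 hb2; rewrite exprMn exprVn.
have hP : b ^+ k.+2 <= a ^+ k.+2 / 4.
  have := pw k.+2 b0 hb2; rewrite exprMn exprVn => h; apply: (le_trans h).
  apply: ler_wpM2l; first exact: exprn_ge0.
  rewrite lef_pV2 ?posrE ?exprn_gt0 //; rewrite !exprS.
  by have := exprn_ege1 k (ler1n R 2); nra.
have hP0 : 0 <= b ^+ k.+2 by apply: exprn_ge0.
have hA2 : 0 <= a ^+ k.+2 by apply: exprn_ge0.
have e1 : a * b ^+ k.+2 <= a * (a ^+ k.+2 / 4) by apply: ler_wpM2l.
have eX : X = a * a ^+ k.+2 by rewrite /X exprS.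
have hB' : 2 * (a * b ^+ k.+2) <= a' by lra.
have hM : Num.max a b = a by apply/max_idPl.
have a'0 : 0 <= a' by lra.
split => //.
-
  have eb : (a * b ^+ k.+2) ^+ k.+3 = X * (Y * Y ^+ k.+1).
    by rewrite exprMn -exprM mulnC exprM -exprS.
  rewrite eb.
  have hYk : Y ^+ k.+1 <= X ^+ k.+1 / t.
    have := pw k.+1 Y0 hY; rewrite expr_div_n => h; apply: (le_trans h).
    apply: ler_wpM2l; first exact: exprn_ge0.
    rewrite lef_pV2 ?posrE ?exprn_gt0 //; try lra.
    by apply: ler_eXnr => //; lra.
  have hYk0 : 0 <= Y ^+ k.+1 by apply: exprn_ge0.
  have s1 : 2 * r * (X * (Y * Y ^+ k.+1)) <= X * X * Y ^+ k.+1.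
    have := ler_wpM2r (mulr_ge0 X0 hYk0) rb.
    move=> h.
    have -> : 2 * r * (X * (Y * Y ^+ k.+1)) = 2 * r * Y * (X * Y ^+ k.+1) by ring.
    by apply: (le_trans h); rewrite mulrA.
  have s2 : X * X * Y ^+ k.+1 <= X * X * (X ^+ k.+1 / t).
    by apply: ler_wpM2l => //; apply: mulr_ge0.
  have s3 : X * X * (X ^+ k.+1 / t) = (X / 2) ^+ k.+3.
    by rewrite /t expr_div_n mulrA; congr (_ * _); rewrite !exprS; ring.
  have s4 : (X / 2) ^+ k.+3 <= a' ^+ k.+3 by apply: pw; lra.
  lra.
- have : a' <= Num.max a' (a * b ^+ k.+2) by rewrite le_max lexx.
  rewrite hM -/X; lra.
- rewrite hM -/X ge_max; apply/andP; split.
    have : r * Y <= X / 2 by lra.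
    lra.
  have : a * b ^+ k.+2 <= X by rewrite eX; lra.
  lra.
Qed.

Lemma large_base (R : realType) (k : nat) (K l r a1 : R) :
  2 <= K -> 0 <= l -> l <= K -> (K ^+ k.+3) ^+ 2 <= r ->
  r - l ^+ k.+3 <= a1 ->
  2 * l <= a1 /\ 2 * r * l ^+ k.+3 <= a1 ^+ k.+3.
Proof.
move=> K2 l0 lK cr ha.
have K0 : 0 <= K by lra.
have cK : K * K * K <= K ^+ k.+3.
  rewrite !exprS mulrA mulrA; apply: ler_peMr.
    by apply: mulr_ge0 => //; apply: mulr_ge0.
  by apply: exprn_ege1; lra.
set c := K ^+ k.+3 in cr cK *.
have c8 : 8 <= c by nra.
have hl : l ^+ k.+3 <= c by apply: pw.
have hl0 : 0 <= l ^+ k.+3 by apply: exprn_ge0.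
have r2 : 2 * c <= r by nra.
have ha2 : r / 2 <= a1 by lra.
split; first nra.
have r1 : 1 <= r / 2 by nra.
have e1 : (r / 2) ^+ 3 <= (r / 2) ^+ k.+3.
  rewrite -(addn3 k) exprD.
  have h1 := exprn_ege1 k r1.
  have h2 : 0 <= (r / 2) ^+ 3 by apply: exprn_ge0; lra.
  exact: ler_peMl h2 h1.
have e2 : (r / 2) ^+ k.+3 <= a1 ^+ k.+3 by apply: pw => //; lra.
have e3 : 2 * r * l ^+ k.+3 <= 2 * r * c by apply: ler_wpM2l => //; lra.
have e4 : 2 * r * c <= (r / 2) ^+ 3.
  rewrite !exprS expr0 mulr1.
  have : 16 * c <= r * r by nra.
  nra.
lra.
Qed.

Lemma aux1 k : (2 + k.+3 * 2 <= (k + 5) * k.+2)%N.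
Proof. nia. Qed.

Lemma seq_bound (R : realType) k (a b : nat -> R) (r K : R) :
  (forall n, 0 <= a n) -> (forall n, 0 <= b n) -> 0 <= r -> 2 <= K ->
  b 0 = 1 -> 1 <= (K / 2) * a 0 -> a 0 <= K / 2 ->
  (forall n, a n.+1 <= a n ^+ k.+3 + r * b n ^+ k.+3) ->
  (forall n, a n ^+ k.+3 - r * b n ^+ k.+3 <= a n.+1) ->
  (forall n, r * b n ^+ k.+3 - a n ^+ k.+3 <= a n.+1) ->
  (forall n, b n.+1 = a n * b n ^+ k.+2) ->
  forall n, (1 <= n)%N ->
   Num.max (a n) (b n) ^+ k.+3 <= K ^+ ((k + 5) * k.+2 ^ n)%N * Num.max (a n.+1) (b n.+1) /\
   Num.max (a n.+1) (b n.+1) <= K ^+ ((k + 5) * k.+2 ^ n)%N * Num.max (a n) (b n) ^+ k.+3.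
Proof.
move=> a0 b0 r0 K2 b00 ha0 ha0' H1 H2 H3 HB n hn.
rewrite HB.
have K1 : 1 <= K by lra.
have K0 : 0 <= K by lra.
have en : (k.+2 <= k.+2 ^ n)%N.
  by case: n hn => // n _; rewrite expnS leq_pmulr // expn_gt0.
set T := K ^+ ((k + 5) * k.+2 ^ n)%N.
have T2 : 2 <= T.
  apply: (le_trans K2); rewrite -{1}(expr1 K) /T; apply: ler_weXn2l => //.
  by rewrite muln_gt0 expn_gt0; apply/andP; split; lia.
set M := Num.max (a n) (b n).
set M' := Num.max (a n.+1) _.
have M0 : 0 <= M by rewrite le_max a0.
have M'0 : 0 <= M' by rewrite le_max a0.
have Md0 : 0 <= M ^+ k.+3 by apply: exprn_ge0.
case: (leP (2 * r) 1) => hr.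
  pose Q m := K ^+ (k.+2 ^ m)%N / 2.
  have QK : forall m, K ^+ (k.+2 ^ m)%N = 2 * Q m by move=> m; rewrite /Q; field.
  have Q1 : forall m, 1 <= Q m.
    move=> m; suff : 2 <= K ^+ (k.+2 ^ m)%N by rewrite QK; lra.
    apply: le_trans K2 _; rewrite -{1}(expr1 K); apply: ler_weXn2l => //.
    by rewrite expn_gt0.
  have Qs : forall m, 2 * Q m ^+ k.+2 <= Q m.+1.
    move=> m.
    have e : Q m.+1 = (2 * Q m) ^+ k.+2 / 2 by rewrite -QK -exprM mulnC -expnS.
    rewrite e [(2 * Q m) ^+ _]exprMn.
    have h1 : 4 <= (2 : R) ^+ k.+2 by rewrite !exprS; have := exprn_ege1 k (ler1n R 2); lra.
    have h2 : 0 <= Q m ^+ k.+2 by apply: exprn_ge0; have := Q1 m; lra.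
    have := ler_wpM2r h2 h1; lra.
  have Qm : forall m, Q m <= Q m.+1.
    move=> m; apply: le_trans (Qs m); have := Q1 m => h.
    have : Q m <= Q m ^+ k.+2 by apply: ler_eXnr.
    lra.
  have P : forall m, b m <= Q m * a m \/ 1 <= 2 * r * Q m ^+ k.+3.
    elim => [|m IH].
      left; rewrite b00 /Q expn0 expr1; lra.
    case: (leP 1 (2 * r * Q m ^+ k.+3)) => c.
      right; apply: le_trans c _; apply: ler_wpM2l; first lra.
      apply: pw; [have := Q1 m; lra | exact: Qm].
    case: IH => IH; last lra.
    left; rewrite HB.
    have := @small_step R k.+3 (a m) (b m) r (a m.+1) (Q m) isT (a0 m) (b0 m) r0 (Q1 m) (H2 m) IH (ltW c).
    move=> h; apply: le_trans h _; apply: ler_wpM2r; [exact: a0 | exact: Qs].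
  have low := @small_low R k.+3 (a n) (b n) r (a n.+1) (Q n) isT (a0 n) (b0 n) r0 hr (Q1 n) (H2 n) (H3 n) (P n).
  have up := @up_gen R k.+3 (a n) (b n) r (a n.+1) isT (a0 n) (b0 n) r0 (H1 n).
  rewrite -/M -/M' in low up.
  split.
    apply: le_trans low _; apply: ler_wpM2r => //.
    have e : 4 * Q n ^+ k.+3 <= (K ^+ (k.+2 ^ n)%N) ^+ k.+3.
      rewrite QK [(2 * Q n) ^+ _]exprMn.
      have h1 : 4 <= (2 : R) ^+ k.+3 by rewrite !exprS; have := exprn_ege1 k (ler1n R 2); lra.
      have h2 : 0 <= Q n ^+ k.+3 by apply: exprn_ge0; have := Q1 n; lra.
      by have := ler_wpM2r h2 h1.
    apply: le_trans e _; rewrite -exprM /T; apply: ler_weXn2l => //.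
    rewrite mulnC; apply: leq_mul => //; by rewrite -addn3 leq_add2l.
  apply: le_trans up _; apply: ler_wpM2r => //; lra.
case: (leP ((K ^+ k.+3) ^+ 2) r) => hl.
  have I : forall m, 2 * b m.+1 <= a m.+1 /\ 2 * r * b m.+1 ^+ k.+3 <= a m.+1 ^+ k.+3.
    elim => [|m [IH1 IH2]].
      rewrite HB b00 expr1n mulr1.
      apply: (@large_base R k K (a 0) r (a 1)) => //; first lra.
      by have := H3 0; rewrite b00 expr1n mulr1.
    have [s1 s2 _ _] := @large_step R k (a m.+1) (b m.+1) r (a m.+2) (a0 _) (b0 _) r0 (H1 _) (H2 _) IH1 IH2.
    by rewrite HB.
  have [IH1 IH2] : 2 * b n <= a n /\ 2 * r * b n ^+ k.+3 <= a n ^+ k.+3.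
    by case: n hn {T en T2 M M' M0 M'0 Md0} => // n _; exact: I.
  have [_ _ s3 s4] := @large_step R k (a n) (b n) r (a n.+1) (a0 _) (b0 _) r0 (H1 _) (H2 _) IH1 IH2.
  rewrite -/M -/M' in s3 s4.
  split.
    apply: le_trans s3 _; apply: ler_wpM2r => //.
  apply: le_trans s4 _; apply: ler_wpM2r => //.
have low := @low_mid R k.+3 (a n) (b n) r (a n.+1) isT (a0 n) (b0 n) (ltW hr) (H2 n) (H3 n).
have up := @up_gen R k.+3 (a n) (b n) r (a n.+1) isT (a0 n) (b0 n) r0 (H1 n).
rewrite -/M -/M' in low up.
have hmx : Num.max 1 r <= (K ^+ k.+3) ^+ 2.
  rewrite ge_max; apply/andP; split; last exact: ltW.
  by apply: exprn_ege1; apply: exprn_ege1.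
have e : 4 * Num.max 1 r <= T.
  have h4 : 4 <= K ^+ 2 by rewrite expr2; nra.
  have h5 : 0 <= Num.max 1 r by rewrite le_max ler01.
  have : K ^+ 2 * (K ^+ k.+3) ^+ 2 <= T.
    rewrite -exprM -exprD /T; apply: ler_weXn2l => //.
    apply: leq_trans (leq_mul (leqnn (k + 5)) en).
    exact: aux1.
  have : 4 * Num.max 1 r <= K ^+ 2 * (K ^+ k.+3) ^+ 2.
    apply: ler_pM => //; lra.
  lra.
have m1 : 1 + r <= 4 * Num.max 1 r.
  have : 1 <= Num.max 1 r by rewrite le_max lexx.
  have : r <= Num.max 1 r by rewrite le_max lexx orbT.
  lra.
split.
  by apply: le_trans low _; apply: ler_wpM2r.
apply: le_trans up _; apply: ler_wpM2r => //; lra.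
Qed.

Local Open Scope classical_set_scope.
Local Open Scope ring_scope.

Lemma limit_part (R : realType) (U G : nat -> R) (c q : R) :
  0 <= c -> 0 <= q -> q < 1 -> (forall n, G n = c * q ^+ n.+1) ->
  (forall n, `|U n.+1 - U n| <= G n - G n.+1) ->
  cvgn U /\ forall n, `|limn U - U n| <= G n.
Proof.
move=> c0 q0 q1 hG hU.
have G0 : forall n, 0 <= G n by move=> n; rewrite hG mulr_ge0 // exprn_ge0.
have Gcvg : G @ \oo --> 0.
  have -> : G = geometric (c * q) q.
    by apply/funext => n; rewrite hG /geometric /= exprS mulrA.
  by apply: cvg_geometric; rewrite ger0_norm.
pose W := fun n => U n - G n.
pose V := fun n => U n + G n.
have Wnd : nondecreasing_seq W.
  apply/nondecreasing_seqP => n; have := hU n; rewrite /W ler_norml; lra.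
have Vni : nonincreasing_seq V.
  apply/nonincreasing_seqP => n; have := hU n; rewrite /V ler_norml; lra.
have WV : forall n, W n <= V 0.
  move=> n; apply: (@le_trans _ _ (V n)); last by apply: Vni.
  by rewrite /W /V; have := G0 n; lra.
have Wc : cvgn W.
  apply: nondecreasing_is_cvgn => //; exists (V 0) => _ [n _ <-]; exact: WV.
have Gc : cvgn G by apply: cvgP Gcvg.
have eU : U = W + G by apply/funext => n; rewrite /W /= subrK.
have Uc : cvgn U by rewrite eU; apply: is_cvgD.
have eV : V = U + G by [].
have Vc : cvgn V by rewrite eV; apply: is_cvgD.
have lG : limn G = 0 by apply: cvg_lim.
have lW : limn W = limn U.
  have := limD Wc Gc; rewrite -eU lG addr0 => -> //; exact: eventually_filter.
have lV : limn V = limn U.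
  have := limD Uc Gc; rewrite -eV lG addr0 => -> //; exact: eventually_filter.
split => // n.
have h1 := nondecreasing_cvgn_le Wnd Wc n.
have h2 := nonincreasing_cvgn_ge Vni Vc n.
rewrite lW /W in h1; rewrite lV /V in h2.
rewrite ler_norml; lra.
Qed.

Lemma aux2 k : (k + 5 <= 3 * k.+3 - 2)%N.
Proof. lia. Qed.

Unset Implicit Arguments.

Theorem proposition5p8 (R : realType) (d : nat) (alpha lambda : algC)
  (v : algC -> R) :
  (2 < d)%N -> alpha != 0 -> lambda != 0 -> is_absval v ->
  forall n0 : nat, (1 <= n0)%N ->
  let u := fun n : nat => ln (Mnv v d alpha lambda n) / (d%:R ^+ n) in
  let L := Num.max (v alpha) (v alpha)^-1 in
  cvgn u /\
  `| limn u - u n0 | <= (3 * d - 2)%:R * ln (2 * L).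
Proof.
case: d => [|[|[|k]]] // _ an0 ln0 hv n0 hn0 u L.
have hv' := hv; case: hv' => hv0 hv1 hvM hvD.
set r := v lambda; set la := v alpha.
have la0 : 0 < la.
  rewrite lt_def hv0 andbT; apply/negP => /eqP /hv1 /eqP; exact/negP.
have L1 : la^-1 <= L by rewrite /L le_max lexx orbT.
have L2 : la <= L by rewrite /L le_max lexx.
have L3 : 1 <= L * la.
  by have := ler_wpM2r (ltW la0) L1; rewrite mulVf // gt_eqF.
have L0 : 1 <= L.
  case: (leP 1 la) => h; first lra.
  by apply: le_trans L1; rewrite invf_ge1 // ltW.
set K := 2 * L.
pose a n := v (AB k.+3 alpha lambda n).1.
pose b n := v (AB k.+3 alpha lambda n).2.
have K2 : 2 <= K by rewrite /K; lra.
have hK2 : K / 2 = L by rewrite /K; field.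
have b00 : b 0 = 1 by rewrite /b /= av1.
have ha0 : 1 <= K / 2 * a 0 by rewrite hK2.
have ha0' : a 0 <= K / 2 by rewrite hK2.
have hB : forall n, b n.+1 = a n * b n ^+ k.+2.
  by move=> n; rewrite /a /b ABS /= hvM avX.
have H1 : forall n, a n.+1 <= a n ^+ k.+3 + r * b n ^+ k.+3.
  move=> n; rewrite /a /b ABS /=.
  by apply: le_trans (hvD _ _) _; rewrite hvM !avX.
have H2 : forall n, a n ^+ k.+3 - r * b n ^+ k.+3 <= a n.+1.
  move=> n; rewrite /a /b ABS /=.
  by apply: le_trans (avB _ _ hv); rewrite hvM !avX.
have H3 : forall n, r * b n ^+ k.+3 - a n ^+ k.+3 <= a n.+1.
  move=> n; rewrite /a /b ABS /=.
  by apply: le_trans (avB2 _ _ hv); rewrite hvM !avX.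
have step := @seq_bound R k a b r K (fun n => hv0 _) (fun n => hv0 _) (hv0 _) K2 b00 ha0 ha0' H1 H2 H3 hB.
pose M n := Num.max (a n) (b n).
have eM : forall n, Mnv v k.+3 alpha lambda n = M n by [].
pose T n := K ^+ ((k + 5) * k.+2 ^ n)%N.
have Tpos : forall n, 0 < T n by move=> n; apply: exprn_gt0; lra.
have Mpos : forall n, (1 <= n)%N -> 0 < M n.
  elim => [//|n IH] _.
  case: n IH => [_|n IH].
    apply: (@lt_le_trans _ _ (b 1)); last by rewrite /M le_max lexx orbT.
    by rewrite hB b00 expr1n mulr1.
  have [s1 _] := step n.+1 isT.
  have hM : 0 < M n.+1 by exact: IH.
  have : 0 < T n.+1 * M n.+2.
    apply: lt_le_trans s1; exact: exprn_gt0.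
  by rewrite pmulr_rgt0.
have lnK0 : 0 <= ln K by apply: ln_ge0; lra.
have lstep : forall n, (1 <= n)%N ->
  `|ln (M n.+1) - (k.+3)%:R * ln (M n)| <= ((k + 5) * k.+2 ^ n)%N%:R * ln K.
  move=> n hn; have [s1 s2] := step n hn.
  have p1 := Mpos n hn.
  have p2 : 0 < M n.+1 by apply: Mpos.
  have p3 : 0 < M n ^+ k.+3 by apply: exprn_gt0.
  have e1 : ln (M n ^+ k.+3) = (k.+3)%:R * ln (M n) by rewrite lnXn // mulr_natl.
  have e2 : ln (T n) = ((k + 5) * k.+2 ^ n)%N%:R * ln K.
    by rewrite /T lnXn ?mulr_natl //; lra.
  have l1 : ln (M n ^+ k.+3) <= ln (T n) + ln (M n.+1).
    rewrite -lnM ?posrE //; rewrite ler_ln ?posrE //; last exact: mulr_gt0.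
  have l2 : ln (M n.+1) <= ln (T n) + ln (M n ^+ k.+3).
    rewrite -lnM ?posrE //; rewrite ler_ln ?posrE //; last exact: mulr_gt0.
  rewrite ler_norml; rewrite e1 e2 in l1 l2; lra.
set x : R := (k.+2)%:R.
have x0 : 0 <= x by rewrite /x ler0n.
have eD : (k.+3)%:R = x + 1 by rewrite /x -addn1 natrD.
pose q := x / (x + 1).
pose c := (k + 5)%:R * ln K.
pose U n := u n.+1.
pose G n := c * q ^+ n.+1.
have eu : forall n, u n = ln (M n) / (x + 1) ^+ n by move=> n; rewrite /u eM eD.
have eG : forall n, G n - G n.+1 = ((k + 5) * k.+2 ^ n.+1)%N%:R * ln K / (x + 1) ^+ n.+2.
  move=> n; rewrite /G /c /q natrM natrX -/x !expr_div_n.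
  have : (x + 1) ^+ n.+1 != 0 by apply: expf_neq0; rewrite gt_eqF //; lra.
  have : (x + 1) != 0 by rewrite gt_eqF //; lra.
  move=> h1 h2; rewrite [(x + 1) ^+ n.+2]exprS [x ^+ n.+2]exprS; field.
  by apply/andP; split.
have hU : forall n, `|U n.+1 - U n| <= G n - G n.+1.
  move=> n; rewrite eG /U !eu.
  have hp : 0 < (x + 1) ^+ n.+2 by apply: exprn_gt0; lra.
  have -> : ln (M n.+2) / (x + 1) ^+ n.+2 - ln (M n.+1) / (x + 1) ^+ n.+1 =
      (ln (M n.+2) - (x + 1) * ln (M n.+1)) / (x + 1) ^+ n.+2.
    rewrite [(x + 1) ^+ n.+2]exprS; field.
    by apply/andP; split; [apply: expf_neq0|]; rewrite gt_eqF //; lra.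
  rewrite normrM [`|_^-1|]ger0_norm ?invr_ge0 ?(ltW hp) //.
  by apply: ler_wpM2r; [rewrite invr_ge0 ltW | rewrite -eD; apply: lstep].
have q0 : 0 <= q by apply: divr_ge0 => //; lra.
have q1 : q < 1 by rewrite /q ltr_pdivrMr; lra.
have c0 : 0 <= c by apply: mulr_ge0 => //; rewrite ler0n.
have [Uc Ub] := @limit_part R U G c q c0 q0 q1 (fun n => erefl) hU.
have hu : u @ \oo --> limn U by rewrite -cvg_shiftS.
split; first exact: cvgP hu.
rewrite (cvg_lim _ hu) //.
case: n0 hn0 => // m _.
apply: le_trans (Ub m) _.
have : G m <= G 0.
  rewrite /G; apply: ler_wpM2l => //; rewrite expr1 exprS.
  apply: ler_piMr => //; apply: exprn_ile1 => //; lra.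
move=> h; apply: le_trans h _.
rewrite /G expr1 /c -/q.
have h1 : ((k + 5)%:R : R) <= (3 * k.+3 - 2)%:R by rewrite ler_nat aux2.
have h2 : (k + 5)%:R * q <= ((k + 5)%:R : R).
  by apply: ler_piMr; [rewrite ler0n | apply: ltW].
have h3 : 0 <= ((k + 5)%:R : R) by rewrite ler0n.
rewrite -/K mulrAC; apply: ler_wpM2r => //; lra.
Qed.
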